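(* Let $m$ be a positive integer, let $\gamma=(f,g,h)\in C^m(\mathbb{R},\mathbb{R}^3)$ be a horizontal curve, and let $K\subseteq\mathbb{R}$ be compact. Then (1) the $m$th divided differences of $\gamma$ converge uniformly on $K$, and (2) $\gamma$ (restricted to $K$) satisfies the discrete $A/V$ condition on $K$.
   Context: A curve $\gamma=(f,g,h)$ with $f,g,h$ absolutely continuous is horizontal if $h'=2(f'g-fg')$ a.e. $C^m(\mathbb{R},\mathbb{R}^3)$: curves whose components are $m$-times continuously differentiable with bounded $m$th derivative. Divided differences: $\phi[x_0]=\phi(x_0)$, $\phi[x_0,\dots,x_k]=(\phi[x_1,\dots,x_k]-\phi[x_0,\dots,x_{k-1}])/(x_k-x_0)$ for distinct points. The $m$th divided differences of $\phi$ converge uniformly on $K$ if for every $\varepsilon>0$ there is $\delta>0$ with $|\phi[X]-\phi[Y]|<\varepsilon$ whenever $X,Y$ are sets of $m+1$ distinct points of $K$ with $\operatorname{diam}(X\cup Y)<\delta$; for $\gamma$ this is required of each component. For $X$ of $m+1$ distinct points, $P(X;\phi)$ is the unique polynomial of degree $\le m$ agreeing with $\phi$ on $X$ (Newton interpolation polynomial). For $\gamma=(f,g,h):E\to\mathbb{R}^3$, $X\subseteq E$, $\#X=m+1$, $P_f=P(X;f)$, $P_g=P(X;g)$, $a,b\in X$: $A[X,\gamma;a,b]=h(b)-h(a)-2\int_a^b(P_f'P_g-P_g'P_f)$, $V[X,\gamma;a,b]=\operatorname{diam}(X)^{2m}+\operatorname{diam}(X)^m\int_a^b(|P_f'|+|P_g'|)$.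 $\gamma$ satisfies the discrete $A/V$ condition on $E$ if for every $\varepsilon>0$ there is $\delta>0$ such that $|A[X,\gamma;a,b]/V[X,\gamma;a,b]|<\varepsilon$ for all $X\subseteq E$ with $\#X=m+1$, $\operatorname{diam}X<\delta$, and $a,b\in X$ with $a<b$. *)

(* Defs.v *)
From Stdlib Require Import Reals Lra.
From Coquelicot Require Import Coquelicot.
Open Scope R_scope.

Fixpoint sumR (F : nat -> R) (n : nat) : R :=
  match n with O => 0 | S k => sumR F k + F k end.
Fixpoint prodR (F : nat -> R) (n : nat) : R :=
  match n with O => 1 | S k => prodR F k * F k end.
(* max_{i<n} F i (for nonnegative F; 0 for n = 0) *)
Fixpoint maxR (F : nat -> R) (n : nat) : R :=
  match n with O => 0 | S k => Rmax (maxR F k) (F k) end.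

Definition Cm (m : nat) (phi : R -> R) : Prop :=
  (forall k x, (k < m)%nat -> ex_derive (Derive_n phi k) x) /\
  (forall x, continuous (Derive_n phi m) x) /\
  (exists B, forall x, Rabs (Derive_n phi m x) <= B).

Definition negligible (N : R -> Prop) : Prop :=
  forall eps, 0 < eps -> exists a b : nat -> R,
    (forall n, a n <= b n) /\
    (forall x, N x -> exists n, a n < x < b n) /\
    (forall n, sumR (fun k => b k - a k) n <= eps).

Definition abs_cont_on (u v : R) (phi : R -> R) : Prop :=
  forall eps, 0 < eps -> exists delta, 0 < delta /\
    forall (n : nat) (a b : nat -> R),
      (forall i, (i < n)%nat -> u <= a i <= b i /\ b i <= v) ->
      (forall i j, (i < n)%nat -> (j < n)%nat -> i <> j -> b i <= a j \/ b j <= a i) ->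
      sumR (fun i => b i - a i) n < delta ->
      sumR (fun i => Rabs (phi (b i) - phi (a i))) n < eps.

Definition loc_abs_cont (phi : R -> R) : Prop :=
  forall u v, u <= v -> abs_cont_on u v phi.

Definition horizontal (f g h : R -> R) : Prop :=
  loc_abs_cont f /\ loc_abs_cont g /\ loc_abs_cont h /\
  exists N, negligible N /\
    forall x, ~ N x ->
      ex_derive f x /\ ex_derive g x /\
      is_derive h x (2 * (Derive f x * g x - f x * Derive g x)).

Fixpoint divdiff (phi : R -> R) (k : nat) (x : nat -> R) : R :=
  match k with
  | O => phi (x O)
  | S k' => (divdiff phi k' (fun i => x (S i)) - divdiff phi k' x) / (x k - x O)
  end.

Definition points_in (m : nat) (E : R -> Prop) (x : nat -> R) : Prop :=
  (forall i, (i <= m)%nat -> E (x i)) /\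
  (forall i j, (i <= m)%nat -> (j <= m)%nat -> i <> j -> x i <> x j).

Definition diam (m : nat) (x : nat -> R) : R :=
  maxR (fun i => maxR (fun j => Rabs (x i - x j)) (S m)) (S m).

Definition diam_union_lt (m : nat) (x y : nat -> R) (delta : R) : Prop :=
  forall i j, (i <= m)%nat -> (j <= m)%nat ->
    Rabs (x i - x j) < delta /\ Rabs (y i - y j) < delta /\ Rabs (x i - y j) < delta.

Definition divdiff_unif_conv (m : nat) (phi : R -> R) (K : R -> Prop) : Prop :=
  forall eps, 0 < eps -> exists delta, 0 < delta /\
    forall x y, points_in m K x -> points_in m K y -> diam_union_lt m x y delta ->
      Rabs (divdiff phi m x - divdiff phi m y) < eps.

Definition newton (phi : R -> R) (m : nat) (x : nat -> R) (t : R) : R :=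
  sumR (fun k => divdiff phi k x * prodR (fun j => t - x j) k) (S m).

Definition A_quant (m : nat) (f g h : R -> R) (x : nat -> R) (a b : R) : R :=
  let Pf := newton f m x in let Pg := newton g m x in
  h b - h a - 2 * RInt (fun t => Derive Pf t * Pg t - Derive Pg t * Pf t) a b.

Definition V_quant (m : nat) (f g : R -> R) (x : nat -> R) (a b : R) : R :=
  let Pf := newton f m x in let Pg := newton g m x in
  diam m x ^ (2 * m) +
  diam m x ^ m * RInt (fun t => Rabs (Derive Pf t) + Rabs (Derive Pg t)) a b.

Definition discrete_AV (m : nat) (f g h : R -> R) (E : R -> Prop) : Prop :=
  forall eps, 0 < eps -> exists delta, 0 < delta /\
    forall x, points_in m E x -> diam m x < delta ->
      forall i j, (i <= m)%nat -> (j <= m)%nat -> x i < x j ->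
        Rabs (A_quant m f g h x (x i) (x j) / V_quant m f g x (x i) (x j)) < eps.

(* Main.v *)
Require Import Defs.
From Stdlib Require Import Reals.
From Coquelicot Require Import Coquelicot.
From Stdlib Require Import Lra Lia Factorial Classical List.
Open Scope R_scope.

Lemma cR_plus (f g : R -> R) x : continuous f x -> continuous g x -> continuous (fun t => f t + g t) x.
Proof. intros; now apply (continuous_plus f g). Qed.
Lemma cR_minus (f g : R -> R) x : continuous f x -> continuous g x -> continuous (fun t => f t - g t) x.
Proof. intros; now apply (continuous_minus f g). Qed.
Lemma cR_mult (f g : R -> R) x : continuous f x -> continuous g x -> continuous (fun t => f t * g t) x.
Proof. intros; now apply (continuous_mult f g). Qed.
Lemma cR_const (c x : R) : continuous (fun _ : R => c) x.
Proof. apply continuous_const. Qed.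
Lemma cR_id (x : R) : continuous (fun t : R => t) x.
Proof. apply continuous_id. Qed.
Lemma cR_abs (f : R -> R) x : continuous f x -> continuous (fun t => Rabs (f t)) x.
Proof. intros; now apply continuous_Rabs_comp. Qed.

Lemma dR_plus (f g : R -> R) x df dg : is_derive f x df -> is_derive g x dg -> is_derive (fun t => f t + g t) x (df + dg).
Proof. intros; now apply (is_derive_plus f g). Qed.
Lemma dR_minus (f g : R -> R) x df dg : is_derive f x df -> is_derive g x dg -> is_derive (fun t => f t - g t) x (df - dg).
Proof. intros; now apply (is_derive_minus f g). Qed.
Lemma dR_mult (f g : R -> R) x df dg : is_derive f x df -> is_derive g x dg -> is_derive (fun t => f t * g t) x (df * g x + f x * dg).
Proof. intros; apply (is_derive_mult f g); auto. intros; apply Rmult_comm. Qed.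
Lemma dR_const (c x : R) : is_derive (fun _ : R => c) x 0.
Proof. apply (is_derive_const c). Qed.
Lemma dR_id (x : R) : is_derive (fun t : R => t) x 1.
Proof. apply (is_derive_id x). Qed.
Lemma dR_ext (f g : R -> R) x l : (forall t, f t = g t) -> is_derive f x l -> is_derive g x l.
Proof. intros; now apply (is_derive_ext f g). Qed.
Lemma dR_ext_val (f : R -> R) x l l' : l = l' -> is_derive f x l -> is_derive f x l'.
Proof. now intros ->. Qed.
Lemma dR_cont (f : R -> R) x l : is_derive f x l -> continuous f x.
Proof. intros H; apply (ex_derive_continuous (K:=R_AbsRing) (V:=R_NormedModule)); now exists l. Qed.

Lemma sumR_ext F G n : (forall i, (i < n)%nat -> F i = G i) -> sumR F n = sumR G n.
Proof. induction n; simpl; intros; auto. rewrite IHn by (intros; apply H; lia). now rewrite H by lia. Qed.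
Lemma prodR_ext F G n : (forall i, (i < n)%nat -> F i = G i) -> prodR F n = prodR G n.
Proof. induction n; simpl; intros; auto. rewrite IHn by (intros; apply H; lia). now rewrite H by lia. Qed.
Lemma prodR_shift F n : prodR F (S n) = F O * prodR (fun l => F (S l)) n.
Proof. induction n; simpl in *. ring. rewrite IHn. ring. Qed.
Lemma prodR_zero F n i : (i < n)%nat -> F i = 0 -> prodR F n = 0.
Proof. induction n; simpl; intros. lia. destruct (Nat.eq_dec i n). subst; rewrite H0; ring. rewrite (IHn ltac:(lia) H0); ring. Qed.
Lemma maxR_ge F n i : (i < n)%nat -> F i <= maxR F n.
Proof. induction n; simpl; intros. lia. destruct (Nat.eq_dec i n). subst; apply Rmax_r.
  eapply Rle_trans; [apply IHn; lia| apply Rmax_l]. Qed.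
Lemma diam_ge m x i j : (i <= m)%nat -> (j <= m)%nat -> Rabs (x i - x j) <= diam m x.
Proof. intros; unfold diam. eapply Rle_trans; [| apply (maxR_ge _ _ i); lia].
  apply (maxR_ge (fun j => Rabs (x i - x j))); lia. Qed.

Definition shift (x : nat -> R) := fun i => x (S i).

Lemma newton_S phi k x t : newton phi (S k) x t =
  newton phi k x t + divdiff phi (S k) x * prodR (fun l => t - x l) (S k).
Proof. reflexivity. Qed.

Lemma newton_T phi k x t : (forall j, (1 <= j <= S k)%nat -> x j <> x O) ->
  newton phi (S k) x t = newton phi k (shift x) t +
     divdiff phi (S k) x * prodR (fun l => t - x (S l)) (S k).
Proof.
  induction k; intros Hd.
  - unfold newton; simpl. assert (x 1%nat - x O <> 0) by (specialize (Hd 1%nat); intro; apply Hd; lia || lra).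
    unfold shift; field; auto.
  - rewrite newton_S, IHk by (intros; apply Hd; lia).
    rewrite (newton_S phi k (shift x)).
    change (prodR (fun l => t - x (S l)) (S (S k))) with (prodR (fun l => t - x (S l)) (S k) * (t - x (S (S k)))).
    rewrite (prodR_shift (fun l => t - x l) (S k)).
    change (prodR (fun l => t - shift x l) (S k)) with (prodR (fun l => t - x (S l)) (S k)).
    assert (E: divdiff phi (S (S k)) x = (divdiff phi (S k) (shift x) - divdiff phi (S k) x) / (x (S (S k)) - x O)) by reflexivity.
    rewrite E.
    assert (x (S (S k)) - x O <> 0) by (specialize (Hd (S (S k))); intro; apply Hd; lia || lra).
    set (Pi := prodR (fun l => t - x (S l)) (S k)).
    set (A := divdiff phi (S k) (shift x)). set (B := divdiff phi (S k) x).
    set (N := newton phi k (shift x) t).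
    field; auto.
Qed.

Definition distinct (m : nat) (x : nat -> R) := forall i j, (i <= m)%nat -> (j <= m)%nat -> i <> j -> x i <> x j.

Lemma newton_interp phi k x : distinct k x -> forall i, (i <= k)%nat -> newton phi k x (x i) = phi (x i).
Proof.
  revert x; induction k; intros x Hd i Hi.
  - assert (i = O) by lia; subst. unfold newton; simpl; ring.
  - destruct (Nat.eq_dec i (S k)).
    + subst. rewrite newton_T.
      * rewrite (prodR_zero _ _ k) by (lia || ring).
        assert (newton phi k (shift x) (x (S k)) = phi (x (S k))).
        { apply (IHk (shift x)). intros a b Ha Hb Hab; unfold shift; apply Hd; lia. lia. }
        rewrite H; ring.
      * intros j Hj; apply Hd; lia.
    + rewrite newton_S. rewrite (prodR_zero _ _ i) by (lia || ring).
      rewrite IHk; [ring| |lia]. intros a b Ha Hb; apply Hd; lia.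
Qed.

Fixpoint PolyL (n : nat) (c : R) (p : R -> R) : Prop :=
  match n with
  | O => forall t, p t = c
  | S n => exists q, PolyL n c q /\ forall t, is_derive p t (q t)
  end.

Lemma PolyL_ext n c p q : (forall t, p t = q t) -> PolyL n c p -> PolyL n c q.
Proof.
  destruct n; simpl; intros E H.
  - intros t; rewrite <- E; auto.
  - destruct H as [r [Hr Hd]]. exists r; split; auto. intros t; apply (dR_ext p); auto.
Qed.

Lemma PolyL_c_ext n c c' p : c = c' -> PolyL n c p -> PolyL n c' p.
Proof. now intros ->. Qed.

Lemma PolyL_plus n c1 c2 p q : PolyL n c1 p -> PolyL n c2 q -> PolyL n (c1 + c2) (fun t => p t + q t).
Proof.
  revert c1 c2 p q; induction n; simpl; intros c1 c2 p q Hp Hq.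
  - intros; rewrite Hp, Hq; auto.
  - destruct Hp as [p' [Hp' Dp]], Hq as [q' [Hq' Dq]].
    exists (fun t => p' t + q' t); split; auto. intros; apply dR_plus; auto.
Qed.

Lemma PolyL_scal n c k p : PolyL n c p -> PolyL n (k * c) (fun t => k * p t).
Proof.
  revert c p; induction n; simpl; intros c p Hp.
  - intros; rewrite Hp; auto.
  - destruct Hp as [p' [Hp' Dp]]. exists (fun t => k * p' t); split; auto.
    intros; apply is_derive_scal; auto.
Qed.

Lemma PolyL_lift n c p : PolyL n c p -> PolyL (S n) 0 p.
Proof.
  revert c p; induction n; simpl; intros c p Hp.
  - exists (fun _ => 0); split; auto. intros t. apply (dR_ext (fun _ => c)); auto. apply dR_const.
  - destruct Hp as [p' [Hp' Dp]]. exists p'; split; auto. eapply IHn; eauto.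
Qed.

Lemma PolyL_mul_lin n c p a : PolyL n c p -> PolyL (S n) (INR (S n) * c) (fun t => p t * (t - a)).
Proof.
  revert c p; induction n; intros c p Hp.
  - exists (fun _ => c); split. simpl; intros; ring.
    intros t. apply (dR_ext (fun t => c * (t - a))). intros; simpl in Hp; rewrite Hp; auto.
    apply (dR_ext_val _ _ (c * (1 - 0))). simpl. ring. apply is_derive_scal.
    apply (dR_minus (fun t => t) (fun _ => a)). apply dR_id. apply dR_const.
  - assert (Hp0 := Hp). destruct Hp as [p' [Hp' Dp]].
    exists (fun t => p' t * (t - a) + p t); split.
    + apply (PolyL_c_ext _ (INR (S n) * c + c)).
      rewrite (S_INR (S n)). ring.
      apply PolyL_plus; auto.
    + intros t. apply (dR_ext_val _ _ (p' t * (t - a) + p t * (1 - 0))). simpl; ring.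
      apply (dR_mult p (fun t => t - a)); auto. apply (dR_minus (fun t => t) (fun _ => a)). apply dR_id. apply dR_const.
Qed.

Lemma PolyL_prod x k : PolyL k (INR (fact k)) (fun t => prodR (fun l => t - x l) k).
Proof.
  induction k.
  - simpl; intros; auto.
  - apply (PolyL_c_ext _ (INR (S k) * INR (fact k))).
    rewrite <- mult_INR. reflexivity.
    apply (PolyL_mul_lin k _ (fun t => prodR (fun l => t - x l) k)); auto.
Qed.

Lemma PolyL_newton phi m x : PolyL m (INR (fact m) * divdiff phi m x) (newton phi m x).
Proof.
  induction m.
  - unfold newton; simpl. intros; ring.
  - apply (PolyL_ext _ _ (fun t => newton phi m x t + divdiff phi (S m) x * prodR (fun l => t - x l) (S m))).
    intros; symmetry; apply newton_S.
    apply (PolyL_c_ext _ (0 + divdiff phi (S m) x * INR (fact (S m)))). ring.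
    apply PolyL_plus. eapply PolyL_lift; eauto. apply PolyL_scal. apply PolyL_prod.
Qed.

Definition chain (n : nat) (u : nat -> R -> R) :=
  forall j, (j < n)%nat -> forall t, is_derive (u j) t (u (S j) t).

Lemma PolyL_chain n c p : PolyL n c p ->
  exists u, (forall t, u O t = p t) /\ chain n u /\ (forall t, u n t = c).
Proof.
  revert c p; induction n; simpl; intros c p Hp.
  - exists (fun _ => p); split; auto. split; auto. intros j Hj; lia.
  - destruct Hp as [q [Hq Dq]]. destruct (IHn c q Hq) as [w [W0 [Wc Wn]]].
    exists (fun j => match j with O => p | S j => w j end). split; auto. split; auto.
    intros j Hj t. destruct j. apply (dR_ext_val _ _ (q t)); auto.
    apply Wc; lia.
Qed.

Lemma chain_cont n u c : chain n u -> (forall t, u n t = c) -> forall j t, (j <= n)%nat -> continuous (u j) t.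
Proof.
  intros Hc Hn j t Hj. destruct (Nat.eq_dec j n).
  - subst. apply (continuous_ext (fun _ => c)). intros; auto. apply cR_const.
  - eapply dR_cont. apply Hc; lia.
Qed.

Definition incr (k : nat) (z : nat -> R) := forall j, (j < k)%nat -> z j < z (S j).

Lemma incr_lt k z : incr k z -> forall i j, (i < j)%nat -> (j <= k)%nat -> z i < z j.
Proof.
  intros H i j Hij. induction Hij; intros Hk. apply H; lia.
  eapply Rlt_trans; [apply IHHij; lia| apply H; lia].
Qed.
Lemma incr_le k z : incr k z -> forall i j, (i <= j)%nat -> (j <= k)%nat -> z i <= z j.
Proof. intros H i j Hij Hk. destruct (Nat.eq_dec i j). subst; lra. left; apply (incr_lt k); auto; lia. Qed.

Definition cons0 (y : R) (z : nat -> R) : nat -> R := fun i => match i with O => y | S i => z i end.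

Lemma insert_pt k z y : incr k z -> (forall j, (j <= k)%nat -> y <> z j) ->
  exists z', incr (S k) z' /\ forall j, (j <= S k)%nat -> z' j = y \/ exists i, (i <= k)%nat /\ z' j = z i.
Proof.
  revert z; induction k; intros z Hz Hy.
  - destruct (Rlt_or_le y (z O)).
    + exists (cons0 y z). split. intros j Hj; assert (j = O) by lia; subst; simpl; auto.
      intros j Hj. destruct j. left; auto. right; exists O; split; auto. assert (j = O) by lia; subst; auto.
    + assert (z O < y) by (destruct H; auto; exfalso; apply (Hy O); auto).
      exists (cons0 (z O) (fun _ => y)). split. intros j Hj; assert (j = O) by lia; subst; simpl; auto.
      intros j Hj. destruct j. right; exists O; auto. left; auto.
  - destruct (Rlt_or_le y (z O)).
    + exists (cons0 y z). split.
      * intros j Hj. destruct j; simpl; auto. apply Hz; lia.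
      * intros j Hj. destruct j. left; auto. right; exists j; split; auto; lia.
    + assert (z O < y) by (destruct H; auto; exfalso; apply (Hy O); auto; lia).
      destruct (IHk (fun i => z (S i))) as [w [Hw Hw2]].
      { intros j Hj; apply Hz; lia. }
      { intros j Hj; apply Hy; lia. }
      exists (cons0 (z O) w). split.
      * intros j Hj. destruct j; simpl.
        -- destruct (Hw2 O ltac:(lia)) as [E | [i [Hi E]]]; rewrite E; auto.
           apply (incr_lt (S k) z); auto; lia.
        -- apply Hw; lia.
      * intros j Hj. destruct j. right; exists O; split; auto; lia.
        simpl. destruct (Hw2 j ltac:(lia)) as [E | [i [Hi E]]]. left; auto.
        right; exists (S i); split; auto; lia.
Qed.

Lemma sort_pts k x : distinct k x ->
  exists z, incr k z /\ forall j, (j <= k)%nat -> exists i, (i <= k)%nat /\ z j = x i.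
Proof.
  induction k; intros Hd.
  - exists x; split. intros j Hj; lia. intros j Hj; exists j; auto.
  - destruct IHk as [z [Hz Hz2]]. intros i j Hi Hj; apply Hd; lia.
    destruct (insert_pt k z (x (S k)) Hz) as [z' [Hz' Hz'2]].
    { intros j Hj E. destruct (Hz2 j Hj) as [i [Hi E2]]. rewrite E2 in E. apply (Hd (S k) i); auto; lia. }
    exists z'; split; auto. intros j Hj. destruct (Hz'2 j Hj) as [E | [i [Hi E]]].
    exists (S k); auto. destruct (Hz2 i Hi) as [i' [Hi' E']]. exists i'; split. lia. congruence.
Qed.

Lemma fin_choice (k : nat) (P : nat -> R -> Prop) :
  (forall j, (j <= k)%nat -> exists y, P j y) -> exists w : nat -> R, forall j, (j <= k)%nat -> P j (w j).
Proof.
  induction k; intros H.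
  - destruct (H O ltac:(lia)) as [y Hy]. exists (fun _ => y). intros j Hj; assert (j = O) by lia; subst; auto.
  - destruct IHk as [w Hw]. intros; apply H; lia.
    destruct (H (S k) ltac:(lia)) as [y Hy].
    exists (fun j => if Nat.eq_dec j (S k) then y else w j). intros j Hj.
    destruct (Nat.eq_dec j (S k)). subst; auto. apply Hw; lia.
Qed.

Lemma Rolle_open (f df : R -> R) a b : (forall t, is_derive f t (df t)) -> a < b -> f a = f b ->
  exists c, a < c < b /\ df c = 0.
Proof.
  intros Hd Hab Hf.
  assert (pr : forall x, a < x < b -> derivable_pt f x).
  { intros x _. exists (df x). apply is_derive_Reals. apply Hd. }
  destruct (Rolle f a b pr) as [c [P E]]; auto.
  { intros x _. apply derivable_continuous_pt. exists (df x). apply is_derive_Reals; apply Hd. }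
  exists c; split; auto. rewrite <- E. symmetry. apply derive_pt_eq_0. apply is_derive_Reals, Hd.
Qed.

Lemma rolle_chain k : forall (u : nat -> R -> R) z, chain k u -> incr k z ->
  (forall j, (j <= k)%nat -> u O (z j) = 0) -> exists xi, z O <= xi <= z k /\ u k xi = 0.
Proof.
  induction k; intros u z Hc Hz H0.
  - exists (z O); split. lra. apply H0; lia.
  - destruct (fin_choice k (fun j c => z j < c < z (S j) /\ u 1%nat c = 0)) as [w Hw].
    { intros j Hj. apply (Rolle_open (u O) (u 1%nat)). intros; apply Hc; lia. apply Hz; lia.
      rewrite !H0 by lia; auto. }
    destruct (IHk (fun j => u (S j)) w) as [xi [Hxi Exi]].
    + intros j Hj t; apply Hc; lia.
    + intros j Hj. destruct (Hw j ltac:(lia)) as [[A B] _]. destruct (Hw (S j) ltac:(lia)) as [[C D] _]. lra.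
    + intros j Hj; apply Hw; auto.
    + exists xi; split; auto. destruct (Hw O ltac:(lia)) as [[A B] _]. destruct (Hw k ltac:(lia)) as [[C D] _]. lra.
Qed.

Lemma rolle_chain_all k (u : nat -> R -> R) z : chain k u -> incr k z ->
  (forall j, (j <= k)%nat -> u O (z j) = 0) ->
  forall j, (j <= k)%nat -> exists xi, z O <= xi <= z k /\ u j xi = 0.
Proof.
  intros Hc Hz H0 j Hj. destruct (rolle_chain j u z) as [xi [Hxi E]].
  - intros i Hi; apply Hc; lia.
  - intros i Hi; apply Hz; lia.
  - intros i Hi; apply H0; lia.
  - exists xi; split; auto. assert (z j <= z k) by (apply (incr_le k); auto). lra.
Qed.

Lemma mvt_bound (psi dpsi : R -> R) lo hi B xi t : (forall s, is_derive psi s (dpsi s)) ->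
  (forall s, lo <= s <= hi -> Rabs (dpsi s) <= B) -> lo <= xi <= hi -> psi xi = 0 -> lo <= t <= hi ->
  Rabs (psi t) <= B * (hi - lo).
Proof.
  intros Hd HB Hxi E Ht.
  destruct (MVT_gen psi xi t dpsi) as [c [Hc Ec]].
  - intros; apply Hd.
  - intros; apply derivable_continuous_pt. exists (dpsi x). apply is_derive_Reals, Hd.
  - rewrite E in Ec. replace (psi t) with (dpsi c * (t - xi)) by lra.
    rewrite Rabs_mult. assert (lo <= c <= hi).
    { revert Hc; unfold Rmin, Rmax; destruct (Rle_dec xi t); intros; lra. }
    assert (HB' := HB c H). assert (0 <= B) by (eapply Rle_trans; [apply Rabs_pos|eauto]).
    apply Rmult_le_compat; auto using Rabs_pos. apply Rabs_le; lra.
Qed.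

Lemma chain_bounds m (u : nat -> R -> R) lo hi om :
  chain m u -> (forall j, (j <= m)%nat -> exists xi, lo <= xi <= hi /\ u j xi = 0) ->
  (forall t, lo <= t <= hi -> Rabs (u m t) <= om) ->
  forall i, (i <= m)%nat -> forall t, lo <= t <= hi -> Rabs (u (m - i)%nat t) <= om * (hi - lo) ^ i.
Proof.
  intros Hc Hz Hm i. induction i; intros Hi t Ht.
  - replace (m - 0)%nat with m by lia. simpl; rewrite Rmult_1_r; auto.
  - destruct (Hz (m - S i)%nat ltac:(lia)) as [xi [Hxi E]].
    replace (om * (hi - lo) ^ S i) with ((om * (hi - lo) ^ i) * (hi - lo)) by (simpl; ring).
    apply (mvt_bound (u (m - S i)%nat) (u (m - i)%nat) lo hi _ xi); auto.
    + intros s. replace (m - i)%nat with (S (m - S i)) by lia. apply Hc; lia.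
    + intros; apply IHi; auto; lia.
Qed.

Lemma Cm_chain m phi : Cm m phi -> chain m (fun j => Derive_n phi j).
Proof.
  intros [H1 _] j Hj t. apply (Derive_correct (Derive_n phi j)). apply H1; auto.
Qed.

Lemma Cm_cont m phi : Cm m phi -> forall j t, (j <= m)%nat -> continuous (Derive_n phi j) t.
Proof.
  intros Hc j t Hj. destruct (Nat.eq_dec j m). subst; apply Hc.
  apply (dR_cont _ _ _ (Cm_chain m phi Hc j ltac:(lia) t)).
Qed.

Lemma interp_chain m phi x : Cm m phi -> distinct m x ->
  exists p : nat -> R -> R, (forall t, p O t = newton phi m x t) /\ chain m p /\
    (forall t, p m t = INR (fact m) * divdiff phi m x) /\
    forall j, (j <= m)%nat -> exists xi, (exists a b, (a <= m)%nat /\ (b <= m)%nat /\ x a <= xi <= x b) /\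
       Derive_n phi j xi = p j xi.
Proof.
  intros Hc Hd.
  destruct (PolyL_chain _ _ _ (PolyL_newton phi m x)) as [p [P0 [Pc Pm]]].
  exists p; split; auto; split; auto; split; auto.
  destruct (sort_pts m x Hd) as [z [Hz Hz2]].
  assert (Cu : chain m (fun j t => Derive_n phi j t - p j t)).
  { intros j Hj t. apply (dR_minus (Derive_n phi j) (p j)). apply (Cm_chain m phi Hc); auto. apply Pc; auto. }
  intros j Hj.
  destruct (rolle_chain_all m _ z Cu Hz) with (j := j) as [xi [Hxi E]]; auto.
  - intros i Hi. destruct (Hz2 i Hi) as [i' [Hi' E]]. rewrite E. simpl. rewrite P0.
    rewrite newton_interp; auto. ring.
  - exists xi. split. destruct (Hz2 O ltac:(lia)) as [a [Ha Ea]]. destruct (Hz2 m ltac:(lia)) as [b [Hb Eb]].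
    exists a, b. rewrite <- Ea, <- Eb. auto. lra.
Qed.

Lemma divdiff_mvt m phi x : Cm m phi -> distinct m x ->
  exists xi, (exists a b, (a <= m)%nat /\ (b <= m)%nat /\ x a <= xi <= x b) /\
     INR (fact m) * divdiff phi m x = Derive_n phi m xi.
Proof.
  intros Hc Hd. destruct (interp_chain m phi x Hc Hd) as [p [P0 [Pc [Pm Hz]]]].
  destruct (Hz m ltac:(lia)) as [xi [H1 H2]]. exists xi; split; auto. rewrite H2, Pm; auto.
Qed.

Lemma error_bounds m phi x lo hi om : (1 <= m)%nat -> Cm m phi -> distinct m x ->
  (forall i, (i <= m)%nat -> lo <= x i <= hi) ->
  (forall s t, lo <= s <= hi -> lo <= t <= hi -> Rabs (Derive_n phi m s - Derive_n phi m t) <= om) ->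
  exists p : nat -> R -> R, (forall t, p O t = newton phi m x t) /\ chain m p /\
    (forall t, p m t = INR (fact m) * divdiff phi m x) /\
    forall t, lo <= t <= hi ->
      Rabs (phi t - p O t) <= om * (hi - lo) ^ m /\
      Rabs (Derive_n phi 1 t - p 1%nat t) <= om * (hi - lo) ^ (m - 1).
Proof.
  intros Hm Hc Hd Hx Hom. destruct (interp_chain m phi x Hc Hd) as [p [P0 [Pc [Pm Hz]]]].
  exists p; split; auto; split; auto; split; auto.
  set (u := fun j t => Derive_n phi j t - p j t).
  assert (Cu : chain m u).
  { intros j Hj t. apply (dR_minus (Derive_n phi j) (p j)). apply (Cm_chain m phi Hc); auto. apply Pc; auto. }
  assert (Zu : forall j, (j <= m)%nat -> exists xi, lo <= xi <= hi /\ u j xi = 0).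
  { intros j Hj. destruct (Hz j Hj) as [xi [[a [b [Ha [Hb Hab]]]] E]]. exists xi. split.
    assert (A := Hx a Ha). assert (B := Hx b Hb). lra. unfold u; rewrite E; ring. }
  assert (Um : forall t, lo <= t <= hi -> Rabs (u m t) <= om).
  { intros t Ht. destruct (Zu m ltac:(lia)) as [xi [Hxi E]]. unfold u in *.
    replace (Derive_n phi m t - p m t) with (Derive_n phi m t - Derive_n phi m xi).
    apply Hom; auto. rewrite !Pm in *. lra. }
  intros t Ht. split.
  - assert (H := chain_bounds m u lo hi om Cu Zu Um m ltac:(lia) t Ht).
    replace (m - m)%nat with O in H by lia. exact H.
  - assert (H := chain_bounds m u lo hi om Cu Zu Um (m - 1) ltac:(lia) t Ht).
    replace (m - (m - 1))%nat with 1%nat in H by lia. exact H.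
Qed.

Lemma Rle_total a b : a <= b \/ b <= a.
Proof. destruct (Rle_dec a b); [left|right]; lra. Qed.

Ltac elim_mm := repeat match goal with
  | |- context [Rmax ?a ?b] => let H := fresh in destruct (Rle_total a b) as [H|H];
        [rewrite (Rmax_right a b H) in * | rewrite (Rmax_left a b H) in *]
  | |- context [Rmin ?a ?b] => let H := fresh in destruct (Rle_total a b) as [H|H];
        [rewrite (Rmin_left a b H) in * | rewrite (Rmin_right a b H) in *]
  | _ : context [Rmax ?a ?b] |- _ => let H := fresh in destruct (Rle_total a b) as [H|H];
        [rewrite (Rmax_right a b H) in * | rewrite (Rmax_left a b H) in *]
  | _ : context [Rmin ?a ?b] |- _ => let H := fresh in destruct (Rle_total a b) as [H|H];
        [rewrite (Rmin_left a b H) in * | rewrite (Rmin_right a b H) in *]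
  end.

Definition len (a b c e : R) := Rmax 0 (Rmin b e - Rmax a c).

Lemma len_pos a b c e : 0 <= len a b c e.
Proof. unfold len; apply Rmax_l. Qed.
Lemma len_le a b c e : a <= b -> len a b c e <= b - a.
Proof. unfold len; intros; elim_mm; lra. Qed.
Lemma len_add a b c e p q : p <= q -> p <= e -> c <= q ->
  len a b c p + len a b q e <= len a b c e.
Proof. unfold len; intros; elim_mm; lra. Qed.
Lemma len_split aN bN c e S1 S2 : aN < bN -> Rmin e aN - c <= S1 -> e - Rmax c bN <= S2 -> 0 <= S1 -> 0 <= S2 ->
  e - c <= S1 + S2 + len aN bN c e.
Proof. unfold len; intros; revert H0 H1; elim_mm; intros; lra. Qed.

Lemma sumR_le F G n : (forall i, (i < n)%nat -> F i <= G i) -> sumR F n <= sumR G n.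
Proof. induction n; simpl; intros; [lra|]. apply Rplus_le_compat; [apply IHn; intros; apply H; lia| apply H; lia]. Qed.
Lemma sumR_pos F n : (forall i, (i < n)%nat -> 0 <= F i) -> 0 <= sumR F n.
Proof. induction n; simpl; intros; [lra|]. assert (0 <= sumR F n) by (apply IHn; intros; apply H; lia). specialize (H n); lia || (assert (0 <= F n) by (apply H; lia); lra). Qed.
Lemma sumR_plus F G n : sumR (fun i => F i + G i) n = sumR F n + sumR G n.
Proof. induction n; simpl; [ring|]. rewrite IHn; ring. Qed.

Lemma cover_len N : forall (a b : nat -> R) c e,
  (forall x, c <= x <= e -> exists n, (n < N)%nat /\ a n < x < b n) ->
  e - c <= sumR (fun n => len (a n) (b n) c e) N.
Proof.
  induction N; intros a b c e Hc.
  - simpl. destruct (Rle_lt_dec c e). destruct (Hc c) as [n [Hn _]]. lra. lia. lra.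
  - simpl. destruct (Rlt_or_le (a N) (b N)) as [HN | HN].
    + set (p := Rmin e (a N)). set (q := Rmax c (b N)).
      assert (H1 : p - c <= sumR (fun n => len (a n) (b n) c p) N).
      { apply IHN. intros x Hx. destruct (Hc x) as [n [Hn Hab]]. unfold p in Hx; revert Hx; elim_mm; intros; lra.
        exists n; split; auto. destruct (Nat.eq_dec n N). subst. unfold p in Hx; revert Hx; elim_mm; intros; lra. lia. }
      assert (H2 : e - q <= sumR (fun n => len (a n) (b n) q e) N).
      { apply IHN. intros x Hx. destruct (Hc x) as [n [Hn Hab]]. unfold q in Hx; revert Hx; elim_mm; intros; lra.
        exists n; split; auto. destruct (Nat.eq_dec n N). subst. unfold q in Hx; revert Hx; elim_mm; intros; lra. lia. }
      assert (H3 : sumR (fun n => len (a n) (b n) c p) N + sumR (fun n => len (a n) (b n) q e) N <=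
                   sumR (fun n => len (a n) (b n) c e) N).
      { rewrite <- sumR_plus. apply sumR_le. intros; apply len_add; unfold p, q; elim_mm; lra. }
      assert (0 <= sumR (fun n => len (a n) (b n) c p) N) by (apply sumR_pos; intros; apply len_pos).
      assert (0 <= sumR (fun n => len (a n) (b n) q e) N) by (apply sumR_pos; intros; apply len_pos).
      assert (H4 := len_split (a N) (b N) c e _ _ HN H1 H2 H H0). lra.
    + assert (e - c <= sumR (fun n => len (a n) (b n) c e) N).
      { apply IHN. intros x Hx. destruct (Hc x Hx) as [n [Hn Hab]]. exists n; split; auto.
        destruct (Nat.eq_dec n N). subst; lra. lia. }
      assert (H0 := len_pos (a N) (b N) c e). lra.
Qed.

Lemma list_bound (l : list R) : exists N, forall y, In y l -> forall n, y = INR n -> (n < N)%nat.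
Proof.
  induction l as [|y l IH].
  - exists O; intros y H; destruct H.
  - destruct IH as [N HN]. destruct (classic (exists n, y = INR n)) as [[n0 E0] | Hn].
    + exists (Nat.max N (S n0)). intros y' [E | H] n En.
      * subst. apply INR_eq in En. subst. lia.
      * specialize (HN y' H n En). lia.
    + exists N. intros y' [E | H] n En. subst. exfalso; apply Hn; eauto. eauto.
Qed.

Lemma finite_subcover (a b : nat -> R) c e :
  (forall x, c <= x <= e -> exists n, a n < x < b n) ->
  exists N, forall x, c <= x <= e -> exists n, (n < N)%nat /\ a n < x < b n.
Proof.
  intros Hc.
  assert (cond : forall y, (exists x, (fun y x => exists n, y = INR n /\ a n < x < b n) y x) -> (fun y => exists n : nat, y = INR n) y).
  { intros y [x [n [E _]]]. eauto. }
  set (fam := mkfamily (fun y => exists n : nat, y = INR n) (fun y x => exists n, y = INR n /\ a n < x < b n) cond).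
  destruct (compact_P3 c e fam) as [D [Dcov Dfin]].
  - split.
    + intros x Hx. destruct (Hc x Hx) as [n Hn]. exists (INR n). simpl. eauto.
    + intros y x [n [E Hx]]. assert (0 < Rmin (x - a n) (b n - x)) by (apply Rmin_pos; lra).
      exists (mkposreal _ H). intros z Hz. unfold disc in Hz; simpl in Hz. exists n; split; auto.
      revert Hz; elim_mm; intros Hz; apply Rabs_def2 in Hz; lra.
  - destruct Dfin as [l Hl]. destruct (list_bound l) as [N HN]. exists N.
    intros x Hx. destruct (Dcov x Hx) as [y [[n [E Hab]] Dy]].
    exists n; split; auto. apply (HN y); auto. apply Hl. split; auto. simpl. eauto.
Qed.

Lemma negligible_dense (N0 : R -> Prop) : negligible N0 ->
  forall t eta, 0 < eta -> exists s, ~ N0 s /\ Rabs (s - t) < eta.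
Proof.
  intros Hn t eta He. apply NNPP. intros Hno.
  assert (Hall : forall s, Rabs (s - t) < eta -> N0 s).
  { intros s Hs. apply NNPP. intros Hs'. apply Hno. eauto. }
  destruct (Hn (eta / 4)) as [a [b [Hab [Hcov Hsum]]]]. lra.
  destruct (finite_subcover a b (t - eta/2) (t + eta/2)) as [N HN].
  { intros x Hx. apply Hcov, Hall. apply Rabs_def1; lra. }
  assert (H1 := cover_len N a b _ _ HN).
  assert (H2 : sumR (fun n => len (a n) (b n) (t - eta/2) (t + eta/2)) N <= sumR (fun k => b k - a k) N).
  { apply sumR_le. intros; apply len_le; auto. }
  specialize (Hsum N). lra.
Qed.

Lemma RInt_lin (u : R -> R) a b k c : ex_RInt u a b ->
  RInt (fun t => k * u t + c) a b = k * RInt u a b + c * (b - a).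
Proof.
  intros Hu. apply is_RInt_unique.
  assert (H := is_RInt_plus _ _ a b _ _ (is_RInt_scal u a b k _ (RInt_correct u a b Hu)) (is_RInt_const a b c)).
  apply (is_RInt_ext _ _ a b _ (fun _ _ => eq_refl)) in H.
  replace (k * RInt u a b + c * (b - a)) with (plus (scal k (RInt u a b)) (scal (b - a) c)).
  exact H. unfold plus, scal; simpl. change (@mult R_AbsRing) with Rmult. unfold mult; simpl. ring.
Qed.

Lemma RInt_lin2 (u v : R -> R) a b k1 k2 : ex_RInt u a b -> ex_RInt v a b ->
  RInt (fun t => k1 * u t + k2 * v t) a b = k1 * RInt u a b + k2 * RInt v a b.
Proof.
  intros Hu Hv. apply is_RInt_unique.
  exact (is_RInt_plus _ _ a b _ _ (is_RInt_scal u a b k1 _ (RInt_correct u a b Hu)) (is_RInt_scal v a b k2 _ (RInt_correct v a b Hv))).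
Qed.

Lemma cont_pt (f : R -> R) x : continuous f x -> continuity_pt f x.
Proof. intros; apply continuity_pt_filterlim; auto. Qed.

Lemma cont_eps (f : R -> R) x eps : continuous f x -> 0 < eps ->
  exists del, 0 < del /\ forall y, Rabs (y - x) < del -> Rabs (f y - f x) < eps.
Proof.
  intros Hc He. apply cont_pt in Hc. destruct (Hc eps He) as [del [Hd H]].
  exists del; split; auto. intros y Hy. destruct (Req_dec y x). subst. rewrite Rminus_diag, Rabs_R0; auto.
  apply (H y). split. split; auto. constructor. simpl; unfold R_dist; auto.
Qed.

Lemma horiz_everywhere m f g h : (1 <= m)%nat -> Cm m f -> Cm m g -> Cm m h -> horizontal f g h ->
  forall t, Derive_n h 1 t = 2 * (Derive_n f 1 t * g t - f t * Derive_n g 1 t).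
Proof.
  intros Hm Cf Cg Ch [_ [_ [_ [N [HN Hd]]]]] t.
  set (D := fun s => Derive_n h 1 s - 2 * (Derive_n f 1 s * g s - f s * Derive_n g 1 s)).
  assert (Dc : continuous D t).
  { unfold D. apply cR_minus. apply (Cm_cont m h Ch 1); auto.
    apply (cR_mult (fun _ => 2)). apply cR_const. apply cR_minus; apply cR_mult.
    apply (Cm_cont m f Cf 1); auto. apply (Cm_cont m g Cg 0); lia.
    apply (Cm_cont m f Cf 0); lia. apply (Cm_cont m g Cg 1); auto. }
  destruct (Req_dec (D t) 0) as [E|E]. unfold D in E; lra.
  exfalso. assert (0 < Rabs (D t)) by (apply Rabs_pos_lt; auto).
  destruct (cont_eps D t (Rabs (D t) / 2) Dc) as [del [Hdel Hc]]. lra.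
  destruct (negligible_dense N HN t del Hdel) as [s [Hs Hst]].
  destruct (Hd s Hs) as [Hf [Hg Hh]].
  assert (Ds : D s = 0).
  { unfold D. change (Derive_n h 1 s) with (Derive h s). change (Derive_n f 1 s) with (Derive f s).
    change (Derive_n g 1 s) with (Derive g s). rewrite (is_derive_unique h s _ Hh). ring. }
  specialize (Hc s Hst). rewrite Ds in Hc. rewrite Rminus_0_l, Rabs_Ropp in Hc. lra.
Qed.

Lemma points_distinct m E x : points_in m E x -> distinct m x.
Proof. intros [_ H]; exact H. Qed.

Lemma unif_cont_interval (u : R -> R) lo hi : (forall t, continuous u t) ->
  forall eps, 0 < eps -> exists del, 0 < del /\
    forall s t, lo <= s <= hi -> lo <= t <= hi -> Rabs (s - t) < del -> Rabs (u s - u t) < eps.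
Proof.
  intros Hc eps He. destruct (Heine u (fun c => lo <= c <= hi) (compact_P3 lo hi)) with (eps := mkposreal eps He) as [del Hd].
  intros; apply cont_pt; auto.
  exists del; split. apply cond_pos. intros s t Hs Ht Hst. apply (Hd s t); auto.
Qed.

Lemma unif_conv_lemma m phi K : Cm m phi -> compact K -> divdiff_unif_conv m phi K.
Proof.
  intros Hc HK eps He.
  destruct (compact_P1 K HK) as [kl [ku Hk]].
  assert (Hf : 0 < INR (fact m)) by (apply lt_0_INR, lt_O_fact).
  destruct (unif_cont_interval (Derive_n phi m) kl ku (fun t => Cm_cont m phi Hc m t (le_n m)) (eps * INR (fact m)))
    as [del [Hdel Hu]]. nra.
  exists del; split; auto. intros x y Hx Hy Hxy.
  destruct (divdiff_mvt m phi x Hc (points_distinct _ _ _ Hx)) as [xi [[a [b [Ha [Hb Hab]]]] Exi]].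
  destruct (divdiff_mvt m phi y Hc (points_distinct _ _ _ Hy)) as [eta [[a' [b' [Ha' [Hb' Hab']]]] Eeta]].
  assert (Kxa := proj1 Hx a Ha). assert (Kxb := proj1 Hx b Hb).
  assert (Kya := proj1 Hy a' Ha'). assert (Kyb := proj1 Hy b' Hb').
  apply Hk in Kxa, Kxb, Kya, Kyb.
  destruct (Hxy b a' Hb Ha') as [_ [_ H1]]. destruct (Hxy a b' Ha Hb') as [_ [_ H2]].
  apply Rabs_def2 in H1, H2.
  assert (Hxe : Rabs (xi - eta) < del) by (apply Rabs_def1; lra).
  specialize (Hu xi eta ltac:(lra) ltac:(lra) Hxe). rewrite <- Exi, <- Eeta in Hu.
  replace (INR (fact m) * divdiff phi m x - INR (fact m) * divdiff phi m y) with
    (INR (fact m) * (divdiff phi m x - divdiff phi m y)) in Hu by ring.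
  rewrite Rabs_mult, (Rabs_right (INR (fact m))) in Hu by lra.
  apply (Rmult_lt_reg_l (INR (fact m))); auto. lra.
Qed.

Lemma Rabs_le_split x y : Rabs x <= y -> - y <= x <= y.
Proof. unfold Rabs; destruct (Rcase_abs x); intros; lra. Qed.

Lemma exR_cont (f : R -> R) a b : (forall t, continuous f t) -> ex_RInt f a b.
Proof. intros H. apply (ex_RInt_continuous (V:=R_CompleteNormedModule)). intros; apply H. Qed.

Lemma AV_lemma m f g h K : (0 < m)%nat -> Cm m f -> Cm m g -> Cm m h -> horizontal f g h -> compact K ->
  discrete_AV m f g h K.
Proof.
  intros Hm Cf Cg Ch Hh HK eps He.
  destruct (compact_P1 K HK) as [kl [ku Hk]].
  assert (H4 : 0 < 4 ^ S m) by (apply pow_lt; lra).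
  set (eta := Rmin 1 (eps / (2 * 4 ^ S m))).
  assert (Heta : 0 < eta) by (apply Rmin_pos; [lra| apply Rdiv_lt_0_compat; lra]).
  assert (Heta1 : eta <= 1) by apply Rmin_l.
  assert (Heta2 : eta <= eps / (2 * 4 ^ S m)) by apply Rmin_r.
  destruct (unif_cont_interval (Derive_n f m) (kl - 1) (ku + 1) (fun t => Cm_cont m f Cf m t (le_n m)) eta Heta)
    as [df [Hdf Huf]].
  destruct (unif_cont_interval (Derive_n g m) (kl - 1) (ku + 1) (fun t => Cm_cont m g Cg m t (le_n m)) eta Heta)
    as [dg [Hdg Hug]].
  exists (Rmin (Rmin (df / 2) (dg / 2)) (1 / 2)). split.
  { apply Rmin_pos; [apply Rmin_pos|]; lra. }
  intros x Hx Hd i j Hi Hj Hij.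
  assert (Hd1 : diam m x < df / 2) by (eapply Rlt_le_trans; [exact Hd| eapply Rle_trans; [apply Rmin_l| apply Rmin_l]]).
  assert (Hd2 : diam m x < dg / 2) by (eapply Rlt_le_trans; [exact Hd| eapply Rle_trans; [apply Rmin_l| apply Rmin_r]]).
  assert (Hd3 : diam m x < 1 / 2) by (eapply Rlt_le_trans; [exact Hd| apply Rmin_r]).
  set (d := diam m x) in *.
  assert (Dx := points_distinct _ _ _ Hx).
  assert (Hdpos : 0 < d).
  { assert (H := diam_ge m x 0 1 ltac:(lia) ltac:(lia)). assert (x 0%nat <> x 1%nat) by (apply Dx; lia).
    assert (0 < Rabs (x 0%nat - x 1%nat)) by (apply Rabs_pos_lt; lra). fold d in H; lra. }
  set (lo := x O - d). set (hi := x O + d).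
  assert (Hxr : forall k, (k <= m)%nat -> lo <= x k <= hi).
  { intros k Hkm. assert (H := diam_ge m x k 0 Hkm ltac:(lia)). fold d in H. destruct (Rabs_le_split _ _ H). unfold lo, hi; lra. }
  assert (Kx0 : kl <= x O <= ku) by (apply Hk, (proj1 Hx); lia).
  assert (Homf : forall s t, lo <= s <= hi -> lo <= t <= hi -> Rabs (Derive_n f m s - Derive_n f m t) <= eta).
  { intros s t Hs Ht. left. apply Huf; unfold lo, hi in *; try lra. apply Rabs_def1; lra. }
  assert (Homg : forall s t, lo <= s <= hi -> lo <= t <= hi -> Rabs (Derive_n g m s - Derive_n g m t) <= eta).
  { intros s t Hs Ht. left. apply Hug; unfold lo, hi in *; try lra. apply Rabs_def1; lra. }
  destruct (error_bounds m f x lo hi eta ltac:(lia) Cf Dx Hxr Homf) as [pf [P0f [Pcf [Pmf Bf]]]].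
  destruct (error_bounds m g x lo hi eta ltac:(lia) Cg Dx Hxr Homg) as [pg [P0g [Pcg [Pmg Bg]]]].
  assert (cf0 : forall t, continuous f t) by (intros t; exact (Cm_cont m f Cf 0 t ltac:(lia))).
  assert (cg0 : forall t, continuous g t) by (intros t; exact (Cm_cont m g Cg 0 t ltac:(lia))).
  assert (cf1 : forall t, continuous (Derive_n f 1) t) by (intros t; exact (Cm_cont m f Cf 1 t ltac:(lia))).
  assert (cg1 : forall t, continuous (Derive_n g 1) t) by (intros t; exact (Cm_cont m g Cg 1 t ltac:(lia))).
  assert (cpf0 : forall t, continuous (pf O) t) by (intros t; exact (chain_cont m pf _ Pcf Pmf 0 t ltac:(lia))).
  assert (cpf1 : forall t, continuous (pf 1%nat) t) by (intros t; exact (chain_cont m pf _ Pcf Pmf 1 t ltac:(lia))).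
  assert (cpg0 : forall t, continuous (pg O) t) by (intros t; exact (chain_cont m pg _ Pcg Pmg 0 t ltac:(lia))).
  assert (cpg1 : forall t, continuous (pg 1%nat) t) by (intros t; exact (chain_cont m pg _ Pcg Pmg 1 t ltac:(lia))).
  assert (df0 : forall t, is_derive f t (Derive_n f 1 t)) by (intros t; exact (Cm_chain m f Cf 0%nat Hm t)).
  assert (dg0 : forall t, is_derive g t (Derive_n g 1 t)) by (intros t; exact (Cm_chain m g Cg 0%nat Hm t)).
  assert (dh0 : forall t, is_derive h t (Derive_n h 1 t)) by (intros t; exact (Cm_chain m h Ch 0%nat Hm t)).
  assert (dpf : forall t, is_derive (pf O) t (pf 1%nat t)) by (intros t; exact (Pcf 0%nat Hm t)).
  assert (dpg : forall t, is_derive (pg O) t (pg 1%nat t)) by (intros t; exact (Pcg 0%nat Hm t)).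
  assert (Hor := horiz_everywhere m f g h ltac:(lia) Cf Cg Ch Hh).
  set (a := x i) in *. set (b := x j) in *.
  assert (Ha := Hxr i Hi). assert (Hb := Hxr j Hj). fold a in Ha. fold b in Hb.
  set (F := fun t => f t - pf O t). set (F1 := fun t => Derive_n f 1 t - pf 1%nat t).
  set (G := fun t => g t - pg O t). set (G1 := fun t => Derive_n g 1 t - pg 1%nat t).
  set (Q := fun t => pf 1%nat t * pg O t - pg 1%nat t * pf O t).
  set (Rr := fun t => pf 1%nat t * G t - F t * pg 1%nat t + F1 t * G t).
  set (W := fun t => F t * pg O t - pf O t * G t - F t * G t).
  set (Psi := fun t => h t - 2 * W t).
  assert (dF : forall t, is_derive F t (F1 t)) by (intros t; apply (dR_minus f (pf O)); auto).
  assert (dG : forall t, is_derive G t (G1 t)) by (intros t; apply (dR_minus g (pg O)); auto).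
  assert (dPsi : forall t, is_derive Psi t (2 * Q t + 4 * Rr t)).
  { intros t.
    assert (dW : is_derive W t ((F1 t * pg O t + F t * pg 1%nat t) - (pf 1%nat t * G t + pf O t * G1 t)
                                 - (F1 t * G t + F t * G1 t))).
    { apply (dR_minus (fun t => F t * pg O t - pf O t * G t) (fun t => F t * G t)).
      apply (dR_minus (fun t => F t * pg O t) (fun t => pf O t * G t)).
      apply (dR_mult F (pg O)); auto. apply (dR_mult (pf O) G); auto. apply (dR_mult F G); auto. }
    assert (dP := dR_minus h (fun t => 2 * W t) t _ _ (dh0 t) (is_derive_scal W t 2 _ dW)).
    refine (dR_ext_val _ _ _ _ _ dP). rewrite (Hor t). match goal with |- @eq _ ?x ?y => change (@eq R x y) end. unfold Rr, Q, F, G, F1, G1. ring. }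
  assert (cQ : forall t, continuous Q t).
  { intros t; unfold Q. apply cR_minus; apply cR_mult; auto. }
  assert (cF : forall t, continuous F t) by (intros t; unfold F; apply cR_minus; auto).
  assert (cG : forall t, continuous G t) by (intros t; unfold G; apply cR_minus; auto).
  assert (cF1 : forall t, continuous F1 t) by (intros t; unfold F1; apply cR_minus; auto).
  assert (cR : forall t, continuous Rr t).
  { intros t; unfold Rr. apply cR_plus; [apply cR_minus|]; apply cR_mult; auto. }
  assert (cI : forall t, continuous (fun t => Rabs (pf 1%nat t) + Rabs (pg 1%nat t)) t).
  { intros t. apply cR_plus; apply cR_abs; auto. }
  assert (eQ : ex_RInt Q a b) by (apply exR_cont; auto).
  assert (eR : ex_RInt Rr a b) by (apply exR_cont; auto).
  assert (eI : ex_RInt (fun t => Rabs (pf 1%nat t) + Rabs (pg 1%nat t)) a b) by (apply exR_cont; auto).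
  assert (IPsi : is_RInt (fun t => 2 * Q t + 4 * Rr t) a b (minus (Psi b) (Psi a))).
  { apply (is_RInt_derive (V:=R_CompleteNormedModule)). intros; apply dPsi. intros t _. apply cR_plus; apply (cR_mult (fun _ => _)); auto; apply cR_const. }
  apply (is_RInt_unique (V:=R_CompleteNormedModule)) in IPsi. rewrite RInt_lin2 in IPsi by auto.
  assert (Fa : forall k, (k <= m)%nat -> F (x k) = 0 /\ G (x k) = 0).
  { intros k Hkm. unfold F, G. rewrite P0f, P0g, !newton_interp; auto. split; ring. }
  assert (Wa : W a = 0) by (unfold W; destruct (Fa i Hi) as [E1 E2]; fold a in E1, E2; rewrite E1, E2; ring).
  assert (Wb : W b = 0) by (unfold W; destruct (Fa j Hj) as [E1 E2]; fold b in E1, E2; rewrite E1, E2; ring).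
  assert (Hhab : h b - h a = 2 * RInt Q a b + 4 * RInt Rr a b).
  { rewrite IPsi. unfold minus, plus, opp; simpl. unfold Psi. rewrite Wa, Wb. ring. }
  assert (DPf : forall t, Derive (newton f m x) t = pf 1%nat t).
  { intros t. apply is_derive_unique. apply (dR_ext (pf O)); auto. }
  assert (DPg : forall t, Derive (newton g m x) t = pg 1%nat t).
  { intros t. apply is_derive_unique. apply (dR_ext (pg O)); auto. }
  assert (EA : A_quant m f g h x a b = 4 * RInt Rr a b).
  { unfold A_quant; cbv zeta.
    rewrite (RInt_ext _ Q). lra.
    intros t _. rewrite DPf, DPg, <- P0f, <- P0g. reflexivity. }
  set (I := RInt (fun t => Rabs (pf 1%nat t) + Rabs (pg 1%nat t)) a b).
  assert (EV : V_quant m f g x a b = d ^ (2 * m) + d ^ m * I).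
  { unfold V_quant; cbv zeta. fold d. f_equal. f_equal. apply RInt_ext. intros t _. rewrite DPf, DPg. reflexivity. }
  rewrite EA, EV.
  assert (Hab : a <= b) by lra.
  assert (I0 : 0 <= I).
  { apply RInt_ge_0; auto. intros; apply Rplus_le_le_0_compat; apply Rabs_pos. }
  set (L := hi - lo) in *.
  assert (HL : L = 2 * d) by (unfold L, hi, lo; ring).
  set (E := eta * L ^ m). set (E1 := eta * L ^ (m - 1)).
  assert (E0 : 0 <= E) by (unfold E; apply Rmult_le_pos; [lra| apply pow_le; lra]).
  assert (E10 : 0 <= E1) by (unfold E1; apply Rmult_le_pos; [lra| apply pow_le; lra]).
  assert (Hpt : forall t, a < t < b -> Rabs (Rr t) <= E * (Rabs (pf 1%nat t) + Rabs (pg 1%nat t)) + E1 * E).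
  { intros t Ht. assert (Htr : lo <= t <= hi) by lra.
    destruct (Bf t Htr) as [B1 B2]. destruct (Bg t Htr) as [B3 B4].
    fold E E1 in B1, B2, B3, B4. unfold Rr.
    change (f t - pf 0%nat t) with (F t) in B1. change (g t - pg 0%nat t) with (G t) in B3.
    change (Derive_n f 1 t - pf 1%nat t) with (F1 t) in B2.
    eapply Rle_trans. apply Rabs_triang. eapply Rle_trans. apply Rplus_le_compat_r. apply Rabs_triang.
    rewrite Rabs_Ropp, !Rabs_mult.
    assert (Rabs (pf 1%nat t) * Rabs (G t) <= Rabs (pf 1%nat t) * E) by (apply Rmult_le_compat_l; auto using Rabs_pos).
    assert (Rabs (F t) * Rabs (pg 1%nat t) <= E * Rabs (pg 1%nat t)) by (apply Rmult_le_compat_r; auto using Rabs_pos).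
    assert (Rabs (F1 t) * Rabs (G t) <= E1 * E) by (apply Rmult_le_compat; auto using Rabs_pos).
    lra. }
  assert (Hint : Rabs (RInt Rr a b) <= E * I + (E1 * E) * (b - a)).
  { eapply Rle_trans. apply abs_RInt_le; auto.
    unfold I. rewrite <- RInt_lin by auto.
    apply RInt_le; auto.
    - apply exR_cont. intros t; apply cR_abs; auto.
    - apply exR_cont. intros t. apply cR_plus. apply (cR_mult (fun _ => E)). apply cR_const. apply cI. apply cR_const. }
  assert (Hm1 : L ^ (m - 1) * L = L ^ m).
  { replace m with (S (m - 1)) at 2 by lia. simpl. ring. }
  assert (HLm : L ^ m = 2 ^ m * d ^ m) by (rewrite HL; apply Rpow_mult_distr).
  assert (Hd2m : d ^ (2 * m) = d ^ m * d ^ m) by (replace (2 * m)%nat with (m + m)%nat by lia; apply pow_add).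
  assert (H4m : 4 ^ m = 2 ^ m * 2 ^ m) by (replace 4 with (2 * 2) by ring; apply Rpow_mult_distr).
  assert (H2m : 1 <= 2 ^ m) by (apply pow_R1_Rle; lra).
  assert (Xpos : 0 < d ^ m) by (apply pow_lt; lra).
  set (X := d ^ m) in *. set (T := 2 ^ m) in *.
  assert (Vpos : 0 < X * X + X * I) by nra.
  assert (Hba : b - a <= L) by (unfold L; lra).
  rewrite Hd2m.
  assert (HA : Rabs (4 * RInt Rr a b) <= 4 * eta * (T * T) * (X * X + X * I)).
  { rewrite Rabs_mult, Rabs_right by lra.
    assert (E1 * E * (b - a) <= eta * (L ^ m * L ^ m)).
    { unfold E1, E. replace (eta * L ^ (m - 1) * (eta * L ^ m) * (b - a)) with ((eta * eta) * (L ^ m * ((b - a) * L ^ (m - 1)))) by ring.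
      assert (0 <= L ^ (m - 1)) by (apply pow_le; lra).
      assert ((b - a) * L ^ (m - 1) <= L ^ m) by (rewrite <- Hm1; nra).
      assert (0 <= L ^ m) by (apply pow_le; lra).
      assert (L ^ m * ((b - a) * L ^ (m - 1)) <= L ^ m * L ^ m) by (apply Rmult_le_compat_l; auto).
      assert (0 <= (b - a) * L ^ (m - 1)) by nra.
      assert (0 <= L ^ m * ((b - a) * L ^ (m - 1))) by nra.
      set (Y := L ^ m * ((b - a) * L ^ (m - 1))) in *. set (Z := L ^ m * L ^ m) in *.
      assert (eta * eta <= eta) by nra.
      apply Rle_trans with (eta * Y). apply Rmult_le_compat_r; auto.
      apply Rmult_le_compat_l; lra. }
    unfold E in *. rewrite HLm in *.
    assert (XI : 0 <= X * I) by (apply Rmult_le_pos; lra).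
    assert (TT : T <= T * T) by nra.
    assert (T * X * I <= T * T * (X * I)) by (replace (T * X * I) with (T * (X * I)) by ring; apply Rmult_le_compat_r; auto).
    nra. }
  assert (H4S : 4 ^ S m = 4 * (T * T)) by (simpl; rewrite H4m; ring).
  assert (Hfin : 4 * eta * (T * T) <= eps / 2).
  { replace (eps / 2) with ((eps / (2 * 4 ^ S m)) * 4 ^ S m) by (field; lra).
    rewrite H4S in *. assert (0 < T * T) by (apply Rmult_lt_0_compat; lra).
    replace (4 * eta * (T * T)) with (eta * (4 * (T * T))) by ring.
    apply Rmult_le_compat_r; lra. }
  rewrite Rabs_div by lra. rewrite (Rabs_right (X * X + X * I)) by lra.
  apply (Rmult_lt_reg_r (X * X + X * I)); auto.
  unfold Rdiv; rewrite Rmult_assoc, Rinv_l, Rmult_1_r by lra.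
  nra.
Qed.


Theorem proposition5p1 (m : nat) (f g h : R -> R) (K : R -> Prop) :
  (0 < m)%nat ->
  Cm m f -> Cm m g -> Cm m h ->
  horizontal f g h ->
  compact K ->
  (divdiff_unif_conv m f K /\ divdiff_unif_conv m g K /\ divdiff_unif_conv m h K) /\
  discrete_AV m f g h K.
Proof.
  intros Hm Cf Cg Ch Hh HK. split.
  - split; [|split]; apply unif_conv_lemma; auto.
  - apply AV_lemma; auto.
Qed.
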